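(* Let $X$ be a finite alphabet, $c\geq1$, $x,y\in X$ letters and $w\in X^c$. Then the sequence $(x,y,w)$ is a code if and only if $x\neq y$ and $w\notin\{x,y\}^c$ (i.e. $w$ contains at least one letter different from both $x$ and $y$).
   Context: $X^*$ is the set of words over the finite alphabet $X$, and $\{x,y\}^c$ is the set of words of length $c$ all of whose letters lie in $\{x,y\}$. A code over $X$ is a finite sequence $C=(v_1,\ldots,v_m)$ of words over $X$ such that every $w\in X^*$ has at most one factorization into code-words: if $w=v_{i_1}\cdots v_{i_l}=v_{j_1}\cdots v_{j_{l'}}$ with $l,l'\geq1$, then $l=l'$ and $i_t=j_t$ for all $t$. (Codes are sequences, not sets.) *)

(* Defs.v *)
From mathcomp Require Import all_boot.
Set Implicit Arguments. Unset Strict Implicit. Unset Printing Implicit Defensive.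

(* A code is a finite sequence C = (v_1,...,v_m) of words (a [seq (seq X)],
   indices 0..m-1) such that every word has at most one factorization:
   for nonempty index sequences ix, jx (indices < size C), if the
   concatenations of the corresponding code-words coincide then ix = jx
   (which includes equal length and equal indices). *)
Definition factor (X : Type) (C : seq (seq X)) (ix : seq nat) : seq X :=
  flatten [seq nth [::] C i | i <- ix].

Definition is_code (X : eqType) (C : seq (seq X)) : Prop :=
  forall ix jx : seq nat,
    ix != [::] -> jx != [::] ->
    all (fun i => i < size C) ix -> all (fun j => j < size C) jx ->
    factor C ix = factor C jx -> ix = jx.

(* Main.v *)
Require Import Defs.
From mathcomp Require Import all_boot.
From mathcomp Require Import zify.

Section S.
Variables (X : eqType) (x y : X) (w : seq X).
Let P := fun a : X => (a == x) || (a == y).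
Let C := [:: [:: x]; [:: y]; w].

Lemma lemA u r r' : all P u -> 0 < size u -> u ++ w ++ r' = w ++ r -> all P w.
Proof.
move=> Pu su E.
have key : forall i, i < size w -> nth x w i = nth x (u ++ w ++ r') i.
  by move=> i hi; rewrite E nth_cat hi.
suff H : forall n i, i < n -> i < size w -> P (nth x w i).
  by apply/(all_nthP x) => i hi; apply: (H i.+1).
elim=> [//|n IH] i hin hiw.
rewrite key // nth_cat.
case: ltnP => hu; first by apply: (all_nthP x Pu).
rewrite nth_cat.
case: ltnP => hw.
  by apply: IH => //; lia.
exfalso.
have : size u + size w <= i by lia.
lia.
Qed.

Lemma lemB jx u r : 0 < size u -> all P u -> all (fun j => j < 3) jx ->
  u ++ factor C jx = w ++ r -> all P w.
Proof.
elim: jx u => [|j jx IH] u su Pu /=.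
  move=> _; rewrite /factor /= cats0 => E.
  have : all P (w ++ r) by rewrite -E.
  by rewrite all_cat => /andP[].
case/andP; case: j => [|[|[|j]]] // _ hjx; rewrite /factor /= -/(factor C jx).
- rewrite -cat1s catA => E; apply: (IH (u ++ [:: x])) => //.
    by rewrite size_cat addn1.
  by rewrite all_cat Pu /= /P eqxx.
- rewrite -cat1s catA => E; apply: (IH (u ++ [:: y])) => //.
    by rewrite size_cat addn1.
  by rewrite all_cat Pu /= /P eqxx orbT.
- by move=> E; apply: (@lemA u r _ Pu su E).
Qed.

Lemma factor_nil jx : w != [::] -> all (fun j => j < 3) jx -> factor C jx = [::] -> jx = [::].
Proof.
move=> wn; case: jx => [//|j jx] /= /andP[hj _].
rewrite /factor /=; case: j hj => [|[|[|j]]] //= _.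
by case: w wn.
Qed.

Lemma uniq_fact : x != y -> w != [::] -> ~~ all P w -> forall ix jx,
  all (fun j => j < 3) ix -> all (fun j => j < 3) jx -> factor C ix = factor C jx -> ix = jx.
Proof.
move=> xy wn nP; elim=> [|i ix IH] jx /=.
  by move=> _ hj E; symmetry; apply: factor_nil => //; rewrite -E.
case/andP=> hi hix; case: jx => [|j jx] /=.
  by move=> _ E; apply: factor_nil => //=; rewrite hi.
case/andP=> hj hjx; rewrite /factor /= -!/(factor C _).
case: i hi => [|[|[|i]]] // _; case: j hj => [|[|[|j]]] // _ /=.
- by case=> E; rewrite (IH jx).
- by case=> E; move: xy; rewrite E eqxx.
- move=> E; exfalso; move/negP: nP; apply.
  have Px : all P [:: x] by rewrite /= /P eqxx.
  exact: (@lemB ix [:: x] (factor C jx) isT Px hix).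
- by case=> E; move: xy; rewrite E eqxx.
- by case=> E; rewrite (IH jx).
- move=> E; exfalso; move/negP: nP; apply.
  have Py : all P [:: y] by rewrite /= /P eqxx orbT.
  exact: (@lemB ix [:: y] (factor C jx) isT Py hix).
- move=> E; exfalso; move/negP: nP; apply.
  have Px : all P [:: x] by rewrite /= /P eqxx.
  exact: (@lemB jx [:: x] (factor C ix) isT Px hjx).
- move=> E; exfalso; move/negP: nP; apply.
  have Py : all P [:: y] by rewrite /= /P eqxx orbT.
  exact: (@lemB jx [:: y] (factor C ix) isT Py hjx).
- by move=> E; rewrite (IH jx) //; move: E; elim: (w) => //= a s IHs [].
Qed.

End S.

Theorem mainTheorem7 (X : finType) (c : nat) (x y : X) (w : seq X) :
  1 <= c -> size w = c ->
  (is_code [:: [:: x]; [:: y]; w] <->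
   (x != y /\ ~ (all (fun a => (a == x) || (a == y)) w))).
Proof.
move=> hc sw; split.
- move=> H; split.
    apply/negP => /eqP xy.
    have := H [:: 0] [:: 1] isT isT isT isT.
    by rewrite /factor /= xy => /(_ erefl).
  move=> Aw.
  pose jx := [seq (if a == x then 0 else 1) | a <- w].
  have E : factor [:: [:: x]; [:: y]; w] jx = w.
    rewrite /jx; move: Aw.
    suff G : forall s, all (fun a => (a == x) || (a == y)) s ->
      factor [:: [:: x]; [:: y]; w] [seq (if a == x then 0 else 1) | a <- s] = s by apply: G.
    elim=> [//|a s IHs] /= /andP[ha hs].
    rewrite /factor /= -/(factor _ _) (IHs hs); case: (a =P x) => [->//|nx] /=.
    by move/orP: ha => [/eqP//|/eqP ->].
  have wn : w != [::] by case: (w) sw hc => //= <-.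
  have := H [:: 2] jx isT _ isT _.
  rewrite /factor /= cats0 -/(factor _ jx) E => /(_ _ _ erefl).
  have jxn : jx != [::] by rewrite /jx; case: (w) wn.
  have jxa : all (fun j => j < 3) jx by rewrite /jx all_map; apply/allP => a _ /=; case: ifP.
  move=> /(_ jxn jxa) ejx.
  have : 2 \in jx by rewrite -ejx inE.
  by rewrite /jx => /mapP [a _]; case: ifP.
- case=> xy nA ix jx _ _ hi hj.
  apply: (@uniq_fact _ x y w xy) => //.
    by case: (w) sw hc => //= <-.
  by apply/negP.
Qed.
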